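(* Let $\mathcal{C}$ be a class of finite reflexive digraphs for which there is a natural number $N$ such that every set of disjoint partial pairs in every member of $\mathcal{C}$ has size at most $N$. Then $\mathcal{C}$ is well quasi-ordered under the standard and under the strong homomorphic image orderings.
   Context: A digraph is a set $D$ with a binary relation $E(D)\subseteq D\times D$; it is reflexive if every loop $(x,x)$ is an edge. A pair of vertices $a,b$ is partial if $a\neq b$ and not both $(a,b)$ and $(b,a)$ are edges. Partial pairs $(a_1,b_1),\dots,(a_k,b_k)$ are disjoint if $a_1,\dots,a_k,b_1,\dots,b_k$ are all distinct. A homomorphism maps edges to edges; it is strong if additionally every edge of the target between vertices of the image is the image of an edge. Standard homomorphic image ordering: $A\preceq B$ iff there is a surjective homomorphism $B\to A$; strong: iff there is a surjective strong homomorphism $B\to A$. Well quasi-ordered means no infinite strictly decreasing sequence and no infinite antichain; digraphs considered up to isomorphism. *)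

(* Defs.v *)
From mathcomp Require Import all_boot.
Set Implicit Arguments. Unset Strict Implicit. Unset Printing Implicit Defensive.

(* A finite digraph, represented (up to isomorphism) on the vertex set 'I_n. *)
Record digraph := Digraph { dsize : nat; dedge : rel 'I_dsize }.
Arguments dedge : clear implicits.

Definition dvert (G : digraph) := 'I_(dsize G).

Definition reflexive_digraph (G : digraph) : Prop :=
  forall x : dvert G, dedge G x x.

Definition partial_pair (G : digraph) (p : dvert G * dvert G) : bool :=
  (p.1 != p.2) && ~~ (dedge G p.1 p.2 && dedge G p.2 p.1).

Arguments partial_pair : clear implicits.

Definition disjoint_partial_pairs (G : digraph) (s : seq (dvert G * dvert G)) : Prop :=
  all (partial_pair G) s /\ uniq (flatten [seq [:: p.1; p.2] | p <- s]).

Definition hom (G H : digraph) (f : dvert G -> dvert H) : Prop :=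
  forall x y, dedge G x y -> dedge H (f x) (f y).

Arguments hom : clear implicits.

Definition strong_hom (G H : digraph) (f : dvert G -> dvert H) : Prop :=
  hom G H f /\
  forall x y, dedge H (f x) (f y) ->
    exists x' y', [/\ f x' = f x, f y' = f y & dedge G x' y'].

Arguments strong_hom : clear implicits.

Definition surj (G H : digraph) (f : dvert G -> dvert H) : Prop :=
  forall y, exists x, f x = y.

Arguments surj : clear implicits.

Definition hom_image_le (A B : digraph) : Prop :=
  exists f : dvert B -> dvert A, hom B A f /\ surj B A f.

Definition strong_hom_image_le (A B : digraph) : Prop :=
  exists f : dvert B -> dvert A, strong_hom B A f /\ surj B A f.

Definition wqo_on (X : Type) (le : X -> X -> Prop) (P : X -> Prop) : Prop :=
  (~ exists s : nat -> X, (forall i, P (s i)) /\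
        forall i, le (s i.+1) (s i) /\ ~ le (s i) (s i.+1))
  /\
  (~ exists s : nat -> X, (forall i, P (s i)) /\
        forall i j, i <> j -> ~ le (s i) (s j)).

(* Main.v *)
Require Import Defs.
From mathcomp Require Import all_boot zify.
From Stdlib Require Import Classical ClassicalEpsilon.
Set Implicit Arguments. Unset Strict Implicit. Unset Printing Implicit Defensive.

Definition incr (p : nat -> nat) := forall n, p n < p n.+1.

Lemma incr_mono p : incr p -> forall n m, n < m -> p n < p m.
Proof.
move=> Hp n m; elim: m => // m IH; rewrite ltnS leq_eqVlt => /orP[/eqP->|/IH h].
  exact: Hp.
exact: ltn_trans h (Hp m).
Qed.

Definition SP (R : nat -> nat -> Prop) :=
  forall p, incr p -> exists q, incr q /\ forall n m, n < m -> R (p (q n)) (p (q m)).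

Lemma SP_and R1 R2 : SP R1 -> SP R2 -> SP (fun i j => R1 i j /\ R2 i j).
Proof.
move=> H1 H2 p Hp; have [q1 [Hq1 R1q]] := H1 p Hp.
have Hpq : incr (fun n => p (q1 n)) by move=> n; apply: incr_mono => //; exact: Hq1.
have [q2 [Hq2 R2q]] := H2 _ Hpq.
exists (fun n => q1 (q2 n)); split; first by move=> n; apply: incr_mono => //; exact: Hq2.
move=> n m nm; split; [apply: R1q; exact: incr_mono | exact: R2q].
Qed.

Lemma SP_all (T : finType) (R : T -> nat -> nat -> Prop) :
  (forall t, SP (R t)) -> SP (fun i j => forall t, R t i j).
Proof.
move=> H.
suff: forall l : seq T, SP (fun i j => forall t, t \in l -> R t i j).
  move=> /(_ (enum T)) H' p Hp; have [q [Hq Rq]] := H' p Hp.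
  exists q; split=> // n m nm t; apply: Rq => //; by rewrite mem_enum.
elim=> [|a l IH].
  move=> p Hp; exists id; split=> // n m _ t; by rewrite in_nil.
move=> p Hp; have [q [Hq Rq]] := SP_and (H a) IH Hp.
exists q; split=> // n m nm t; rewrite in_cons => /orP[/eqP->|tl].
  exact: (Rq n m nm).1.
exact: (Rq n m nm).2 t tl.
Qed.

Lemma SP_fin (A : finType) (f : nat -> A) : SP (fun i j => f i = f j).
Proof.
move=> p Hp.
have [a Ha] : exists a, forall n, exists m, (n < m) && (f (p m) == a).
  apply: NNPP => Hn.
  have Hb : forall a, exists n, forall m, n < m -> f (p m) != a.
    move=> a; apply: NNPP => Hn2; apply: Hn; exists a => n; apply: NNPP => Hn3.
    apply: Hn2; exists n => m nm; apply/negP => /eqP fa; apply: Hn3; exists m.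
    by rewrite nm fa eqxx.
  suff: forall l : seq A, exists n, forall m, n < m -> f (p m) \notin l.
    move=> /(_ (enum A)) [n Hn']; by move: (Hn' n.+1 (ltnSn n)); rewrite mem_enum.
  elim=> [|b l [n IH]]; first by exists 0.
  have [n' Hn'] := Hb b; exists (maxn n n') => m; rewrite gtn_max => /andP[h1 h2].
  by rewrite in_cons negb_or Hn' // IH.
pose next k := ex_minn (Ha k).
have nextP k : (k < next k) && (f (p (next k)) == a) by rewrite /next; case: ex_minnP.
pose q := fix q (n : nat) : nat := if n is n'.+1 then next (q n') else next 0.
exists q; split; first by move=> n; exact: (andP (nextP _)).1.
have qa n : f (p (q n)) = a by case: n => [|n] /=; apply/eqP; exact: (andP (nextP _)).2.
by move=> n m _; rewrite !qa.
Qed.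

Lemma exmin (g : nat -> nat) k : exists a, k <= a /\ forall n, k <= n -> g a <= g n.
Proof.
suff H: forall v, (exists n, k <= n /\ g n <= v) ->
    exists a, k <= a /\ forall n, k <= n -> g a <= g n.
  apply: (H (g k)); by exists k.
elim=> [|v IH] [n [kn gn]].
  exists n; split=> // m _; by move: gn; rewrite leqn0 => /eqP->.
case: (classic (exists n, k <= n /\ g n <= v)) => [/IH//|Hno].
exists n; split=> // m km; rewrite leqNgt; apply/negP => lt; apply: Hno; exists m; split => //.
by rewrite -ltnS (leq_trans lt gn).
Qed.

Lemma SP_nat (f : nat -> nat) : SP (fun i j => f i <= f j).
Proof.
move=> p Hp.
pose g n := f (p n).
pose next k := proj1_sig (constructive_indefinite_description _ (exmin g k)).
have nextP k : k <= next k /\ forall n, k <= n -> g (next k) <= g n.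
  by rewrite /next; case: constructive_indefinite_description.
pose q := fix q (n : nat) : nat := if n is n'.+1 then next (q n').+1 else next 0.
have Hq : incr q by move=> n /=; exact: (nextP _).1.
have key n x : q n <= x -> g (q n) <= g x.
  case: n => [|n] /= h; first exact: (nextP 0).2.
  apply: (nextP _).2; exact: leq_trans (nextP _).1 h.
exists q; split => // n m nm; apply: key; apply: ltnW; exact: incr_mono.
Qed.

Definition core_ok (K : nat) (G : digraph) (c : seq (dvert G)) :=
  [/\ uniq c, size c <= K &
      forall x y : dvert G, x \notin c -> y \notin c -> x != y -> dedge G x y].

Lemma bounded_max (P : nat -> Prop) B :
  P 0 -> (forall m, P m -> m <= B) -> exists n, P n /\ forall m, P m -> m <= n.
Proof.
elim: B => [|B IH] P0 HB.
  exists 0; split=> // m /HB; by rewrite leqn0 => /eqP->.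
case: (classic (P B.+1)) => [PB|nPB]; first by exists B.+1.
apply: IH => // m Pm; move: (HB m Pm); rewrite leq_eqVlt ltnS => /orP[/eqP e|//].
by move: Pm; rewrite e => /nPB.
Qed.

Lemma size_flat2 (T : Type) (s : seq (T * T)) :
  size (flatten [seq [:: p.1; p.2] | p <- s]) = 2 * size s.
Proof. elim: s => [|p s IH] //=; rewrite IH; lia. Qed.

Lemma exists_core (G : digraph) N :
  (forall s : seq (dvert G * dvert G), disjoint_partial_pairs s -> size s <= N) ->
  exists c : seq (dvert G), core_ok (2 * N) c.
Proof.
move=> HN.
have P0 : exists s : seq (dvert G * dvert G), disjoint_partial_pairs s /\ size s = 0.
  by exists [::].
have := @bounded_max (fun n => exists s : seq (dvert G * dvert G),
   disjoint_partial_pairs s /\ size s = n) N P0.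
case; first by move=> m [s [D <-]]; apply: HN.
move=> n [[s [[Ds1 Ds2] Ss]] Hmax].
exists (flatten [seq [:: p.1; p.2] | p <- s]); split => //.
  rewrite size_flat2; move: (HN s (conj Ds1 Ds2)); lia.
move=> x y xc yc xy; apply: contraT => nxy.
have D' : disjoint_partial_pairs ((x, y) :: s).
  split; first by rewrite /= Ds1 andbT /partial_pair /= xy (negbTE nxy).
  by rewrite /= in_cons negb_or xy xc yc Ds2.
have := Hmax (size s).+1 (ex_intro _ ((x, y) :: s) (conj D' erefl)).
by rewrite Ss ltnn.
Qed.

Definition typ K (G : digraph) (c : seq (dvert G)) (v : dvert G) : {ffun 'I_K -> bool * bool} :=
  [ffun i : 'I_K => (nth false [seq dedge G u v | u <- c] i,
                     nth false [seq dedge G v u | u <- c] i)].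
Definition cgraph K (G : digraph) (c : seq (dvert G)) : {ffun 'I_K * 'I_K -> bool} :=
  [ffun ij : 'I_K * 'I_K =>
     nth false [seq nth false [seq dedge G u u' | u' <- c] ij.2 | u <- c] ij.1].
Definition tset K (G : digraph) (c : seq (dvert G)) (t : {ffun 'I_K -> bool * bool})
  : {set dvert G} := [set v | (v \notin c) && (@typ K G c v == t)].
Definition mult K (G : digraph) (c : seq (dvert G)) t := #|@tset K G c t|.
Arguments typ K {G} c v.
Arguments cgraph K {G} c.
Arguments tset K {G} c t.
Arguments mult K {G} c t.

Lemma typE K G (c : seq (dvert G)) v g0 i (Hi : i < K) : i < size c ->
  typ K c v (Ordinal Hi) = (dedge G (nth g0 c i) v, dedge G v (nth g0 c i)).
Proof. move=> ic; by rewrite ffunE /= !(nth_map g0). Qed.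

Lemma cgraphE K G (c : seq (dvert G)) g0 i j (Hi : i < K) (Hj : j < K) :
  i < size c -> j < size c ->
  cgraph K c (Ordinal Hi, Ordinal Hj) = dedge G (nth g0 c i) (nth g0 c j).
Proof. move=> ic jc; by rewrite ffunE /= !(nth_map g0). Qed.

Lemma inT K (G : digraph) (c : seq (dvert G)) v : v \notin c -> v \in tset K c (typ K c v).
Proof. by move=> h; rewrite inE h eqxx. Qed.

Lemma build K (G H : digraph) (cG : seq (dvert G)) (cH : seq (dvert H)) :
  reflexive_digraph G -> reflexive_digraph H ->
  core_ok K cG -> core_ok K cH -> size cG = size cH ->
  cgraph K cG = cgraph K cH ->
  (forall t, (0 < mult K cG t) = (0 < mult K cH t)) ->
  (forall t, mult K cG t <= mult K cH t) ->
  strong_hom_image_le G H.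
Proof.
move=> rG rH [uG sGK clG] [uH sHK clH] sz cg supp mle.
have Hex : forall v : dvert H, exists w : dvert G, True.
  move=> v; case vc: (v \in cH).
    have : 0 < size cG by rewrite sz; move: vc; case: (cH).
    case: (cG) => [|w _] //= _; by exists w.
  have : 0 < mult K cH (typ K cH v).
    apply/card_gt0P; exists v; apply: inT; by rewrite vc.
  rewrite -supp => /card_gt0P [w _]; by exists w.
case: (posnP (dsize G)) => [G0|Gpos].
  have noG : dvert G -> False by case=> k; rewrite G0.
  have noH : dvert H -> False by move=> v; have [w _] := Hex v; exact: noG w.
  exists (fun v => match noH v with end); split; [split|].
  - move=> x; case: (noH x).
  - move=> x; case: (noH x).
  - move=> y; case: (noG y).
pose g0 : dvert G := Ordinal Gpos.
pose f (v : dvert H) : dvert G :=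
  if v \in cH then nth g0 cG (index v cH)
  else nth g0 (enum (tset K cG (typ K cH v)))
          (index v (enum (tset K cH (typ K cH v))) %% size (enum (tset K cG (typ K cH v)))).
have F1 v : v \in cH -> f v = nth g0 cG (index v cH) by rewrite /f => ->.
have F2 v : v \notin cH -> f v \in tset K cG (typ K cH v).
  move=> vc; rewrite /f (negbTE vc).
  have pos : 0 < size (enum (tset K cG (typ K cH v))).
    rewrite -cardE; move: (supp (typ K cH v)); rewrite /mult => ->.
    apply/card_gt0P; exists v; exact: inT.
  by rewrite -mem_enum mem_nth // ltn_pmod.
have F2' v : v \notin cH -> f v \notin cG /\ typ K cG (f v) = typ K cH v.
  by move=> /F2; rewrite inE => /andP[a /eqP b].
have hK i : i < size cH -> i < K by move=> h; exact: leq_trans h sHK.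
have Ef x y : dedge G (f x) (f y) = dedge H x y.
  case xc: (x \in cH); case yc: (y \in cH).
  - have ix : index x cH < size cH by rewrite index_mem.
    have iy : index y cH < size cH by rewrite index_mem.
    have ixG : index x cH < size cG by rewrite sz.
    have iyG : index y cH < size cG by rewrite sz.
    have := congr1 (fun g : {ffun 'I_K * 'I_K -> bool} => g (Ordinal (hK _ ix), Ordinal (hK _ iy))) cg.
    rewrite /= (cgraphE g0) // (cgraphE x) // !nth_index // !F1 //; exact: id.
  - have ix : index x cH < size cH by rewrite index_mem.
    have ixG : index x cH < size cG by rewrite sz.
    have [ycG ty] := F2' y (negbT yc).
    have := congr1 (fun g : {ffun 'I_K -> bool * bool} => (g (Ordinal (hK _ ix))).1) ty.
    rewrite /= (typE _ g0) // (typE _ x) //= nth_index // (F1 x) //; exact: id.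
  - have iy : index y cH < size cH by rewrite index_mem.
    have iyG : index y cH < size cG by rewrite sz.
    have [xcG tx] := F2' x (negbT xc).
    have := congr1 (fun g : {ffun 'I_K -> bool * bool} => (g (Ordinal (hK _ iy))).2) tx.
    rewrite /= (typE _ g0) // (typE _ y) //= nth_index // (F1 y) //; exact: id.
  - have [xcG _] := F2' x (negbT xc); have [ycG _] := F2' y (negbT yc).
    transitivity true.
      case: (eqVneq (f x) (f y)) => [->|ne]; [exact: rG | exact: clG].
    symmetry; case: (eqVneq x y) => [->|ne]; [exact: rH | apply: clH => //].
      by rewrite xc.
    by rewrite yc.
exists f; split; [split|].
- by move=> x y e; rewrite Ef.
- move=> x y e; exists x, y; split => //; by rewrite -Ef.
move=> w; case wc: (w \in cG).
  set i := index w cG.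
  have iG : i < size cG by rewrite index_mem.
  have iH : i < size cH by rewrite -sz.
  have [h0 _] : exists h0 : dvert H, True.
    by move: iH; case: (cH) => [|h l] //; exists h.
  exists (nth h0 cH i).
  have vin : nth h0 cH i \in cH by rewrite mem_nth.
  by rewrite F1 // index_uniq // nth_index.
have wt := inT K (negbT wc).
move: wt; set t := typ K cG w => wt.
have iG : index w (enum (tset K cG t)) < size (enum (tset K cG t)).
  by rewrite index_mem mem_enum.
have iH : index w (enum (tset K cG t)) < size (enum (tset K cH t)).
  apply: leq_trans iG _; rewrite -!cardE; exact: mle.
have [h0 _] : exists h0 : dvert H, True.
  by move: iH; case: (enum (tset K cH t)) => [|h l] //; exists h.
set v := nth h0 (enum (tset K cH t)) (index w (enum (tset K cG t))).
have vin : v \in tset K cH t by rewrite -mem_enum mem_nth.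
move: (vin); rewrite inE => /andP[vc /eqP vt].
exists v; rewrite /f (negbTE vc) vt index_uniq ?enum_uniq // modn_small //.
by rewrite nth_index // mem_enum.
Qed.

Lemma good (C : digraph -> Prop) N : (forall G, C G -> reflexive_digraph G) ->
  (forall G, C G -> forall s : seq (dvert G * dvert G), disjoint_partial_pairs s -> size s <= N) ->
  forall s : nat -> digraph, (forall i, C (s i)) ->
    exists i j, i < j /\ strong_hom_image_le (s i) (s j).
Proof.
move=> Hr HN s Cs.
have Hc i : exists c : seq (dvert (s i)), core_ok (2 * N) c := exists_core (HN _ (Cs i)).
pose c i := proj1_sig (constructive_indefinite_description _ (Hc i)).
have cP i : core_ok (2 * N) (c i) by rewrite /c; case: constructive_indefinite_description.
pose code i := (@inord (2 * N) (size (c i)), cgraph (2 * N) (c i),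
   [ffun t : {ffun 'I_(2 * N) -> bool * bool} => 0 < mult (2 * N) (c i) t]).
have HSP : SP (fun i j => code i = code j /\
     forall t : {ffun 'I_(2 * N) -> bool * bool}, mult (2 * N) (c i) t <= mult (2 * N) (c j) t).
  apply: (@SP_and (fun i j => code i = code j)
     (fun i j => forall t : {ffun 'I_(2 * N) -> bool * bool}, mult (2 * N) (c i) t <= mult (2 * N) (c j) t)).
    exact: (SP_fin code).
  apply: (@SP_all _ (fun (t : {ffun 'I_(2 * N) -> bool * bool}) i j => mult (2 * N) (c i) t <= mult (2 * N) (c j) t)) => t.
  exact: (SP_nat (fun i => mult (2 * N) (c i) t)).
have [q [Hq Hq2]] := HSP id (fun n => ltnSn n).
have [Hcode Hm] := Hq2 0 1 isT.
exists (q 0), (q 1); split; first exact: Hq.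
have [cP0 cP1] := (cP (q 0), cP (q 1)).
case: (cP0) => _ s0 _; case: (cP1) => _ s1 _.
rewrite /code in Hcode; case: Hcode => Hsz Hcg Hsupp.
apply: build (Hr _ (Cs _)) (Hr _ (Cs _)) cP0 cP1 _ Hcg _ Hm.
  have := congr1 val Hsz; rewrite /= !inordK //; by rewrite ltnS.
move=> t; have := congr1 (fun g : {ffun _ -> bool} => g t) Hsupp; by rewrite /= !ffunE.
Qed.

Lemma hom_trans A B D : hom_image_le A B -> hom_image_le B D -> hom_image_le A D.
Proof.
move=> [f [hf sf]] [g [hg sg]]; exists (fun x => f (g x)); split.
  move=> x y e; exact: hf (hg _ _ e).
move=> y; have [x <-] := sf y; have [z <-] := sg x; by exists z.
Qed.

Lemma shom_trans A B D :
  strong_hom_image_le A B -> strong_hom_image_le B D -> strong_hom_image_le A D.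
Proof.
move=> [f [[hf rf] sf]] [g [[hg rg] sg]]; exists (fun x => f (g x)); split; [split|].
- move=> x y e; exact: hf (hg _ _ e).
- move=> x y e; have [x1 [y1 [ex ey e1]]] := rf _ _ e.
  have [x2 ex2] := sg x1; have [y2 ey2] := sg y1.
  rewrite -ex2 -ey2 in e1; have [x3 [y3 [ex3 ey3 e3]]] := rg _ _ e1.
  exists x3, y3; split => //.
    by rewrite ex3 ex2.
  by rewrite ey3 ey2.
move=> y; have [x <-] := sf y; have [z <-] := sg x; by exists z.
Qed.

Lemma shom_hom A B : strong_hom_image_le A B -> hom_image_le A B.
Proof. by move=> [f [[hf _] sf]]; exists f. Qed.

Lemma wqo_of (le : digraph -> digraph -> Prop) (C : digraph -> Prop) :
  (forall A, le A A) ->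
  (forall A B D, le A B -> le B D -> le A D) ->
  (forall s, (forall i, C (s i)) -> exists i j, i < j /\ le (s i) (s j)) ->
  wqo_on le C.
Proof.
move=> rf tr gd; split.
  move=> [s [Cs Hs]]; have [i [j [ij Hij]]] := gd s Cs.
  have chain k : le (s (i.+1 + k)) (s i.+1).
    elim: k => [|k IH]; first by rewrite addn0.
    apply: tr IH; rewrite addnS; exact: (Hs _).1.
  have := chain (j - i.+1); rewrite subnKC // => hj.
  exact: (Hs i).2 (tr _ _ _ Hij hj).
move=> [s [Cs Hs]]; have [i [j [ij Hij]]] := gd s Cs.
apply: (Hs i j _ Hij) => e; by rewrite e ltnn in ij.
Qed.

Theorem lemma4p5 (C : digraph -> Prop) :
  (forall G, C G -> reflexive_digraph G) ->
  (exists N : nat, forall G, C G -> forall s : seq (dvert G * dvert G),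
      disjoint_partial_pairs s -> size s <= N) ->
  wqo_on hom_image_le C /\ wqo_on strong_hom_image_le C.
Proof.
move=> Hr [N HN]; have gd := good Hr HN.
split; apply: wqo_of.
- by move=> A; exists id; split => // y; exists y.
- exact: hom_trans.
- move=> s Cs; have [i [j [ij H]]] := gd s Cs; exists i, j; split => //; exact: shom_hom.
- move=> A; exists id; split; [split|] => //.
    by move=> x y e; exists x, y.
  by move=> y; exists y.
- exact: shom_trans.
- exact: gd.
Qed.
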